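(* Let $G$ be the cdf of a continuous real random variable. For $\lambda\in\mathbb{R}$ define $$F_{R19}(x)=(1-\lambda)G(x)+3\lambda G^2(x)-2\lambda G^3(x),$$ and for $(\lambda_1,\lambda_2)\in\mathbb{R}^2$ define $F_G(x)=\lambda_1 G(x)+(\lambda_2-\lambda_1)G^2(x)+(1-\lambda_2)G^3(x)$. Let $\mathscr{S}_G=\{(\lambda_1,\lambda_2):0\le\lambda_1\le1,\ -1\le\lambda_2\le1\}$ and $\mathscr{S}_{MG}=\{(\lambda_1,\lambda_2):0\le\lambda_1\le3,\ 0\le\lambda_2\le3,\ 0\le\lambda_1+\lambda_2\le3\}$. Then: (i) For every $\lambda\in[-1,1]$ with $\lambda\neq0$, there is no $(\lambda_1,\lambda_2)\in\mathscr{S}_G$ such that $F_{R19}$ with parameter $\lambda$ coincides with $F_G$ with parameters $(\lambda_1,\lambda_2)$. (ii) For every $\lambda\in[-\tfrac12,1]$, $(1-\lambda,1+2\lambda)\in\mathscr{S}_{MG}$ and $F_{R19}$ with parameter $\lambda$ coincides with $F_G$ with parameters $(1-\lambda,1+2\lambda)$. (iii) For every $\lambda\in[-2,1]$, $F_{R19}$ is a cdf.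
   Context: A cdf is a nondecreasing, right-continuous function $F:\mathbb{R}\to[0,1]$ with limits $0$ at $-\infty$ and $1$ at $+\infty$. $G^k(x)=(G(x))^k$. *)

(* Defs.v *)
From HB Require Import structures.
From mathcomp Require Import all_boot all_order all_algebra.
From mathcomp Require Import all_classical all_reals all_analysis.
Set Implicit Arguments. Unset Strict Implicit. Unset Printing Implicit Defensive.
Import Order.TTheory GRing.Theory Num.Theory.
Import numFieldNormedType.Exports.
Local Open Scope classical_set_scope.
Local Open Scope ring_scope.

Definition is_cdf (R : realType) (F : R -> R) : Prop :=
  [/\ (forall x y : R, x <= y -> F x <= F y),
      (forall x : R, 0 <= F x <= 1),
      (forall a : R, F x @[x --> a^'+] --> F a),
      F x @[x --> -oo] --> (0 : R)
    & F x @[x --> +oo] --> (1 : R)].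

Definition is_continuous_cdf (R : realType) (G : R -> R) : Prop :=
  is_cdf G /\ continuous G.

Definition F_R19 (R : realType) (G : R -> R) (lam : R) : R -> R :=
  fun x => (1 - lam) * G x + 3 * lam * (G x) ^+ 2 - 2 * lam * (G x) ^+ 3.

Definition F_Gfam (R : realType) (G : R -> R) (l1 l2 : R) : R -> R :=
  fun x => l1 * G x + (l2 - l1) * (G x) ^+ 2 + (1 - l2) * (G x) ^+ 3.

Definition S_G (R : realType) (l1 l2 : R) : Prop :=
  0 <= l1 <= 1 /\ -1 <= l2 <= 1.

Definition S_MG (R : realType) (l1 l2 : R) : Prop :=
  [/\ 0 <= l1 <= 3, 0 <= l2 <= 3 & 0 <= l1 + l2 <= 3].

(* Main.v *)
Require Import Defs.
From HB Require Import structures.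
From mathcomp Require Import all_boot all_order all_algebra.
From mathcomp Require Import all_classical all_reals all_analysis.
From mathcomp Require Import ring lra.
Set Implicit Arguments. Unset Strict Implicit.
Import Order.TTheory GRing.Theory Num.Theory.
Import numFieldNormedType.Exports.
Local Open Scope classical_set_scope.
Local Open Scope ring_scope.

Definition hf (R : realType) (lam t : R) : R :=
  (1 - lam) * t + 3 * lam * (t * t) - 2 * lam * (t * (t * t)).

Lemma F_R19E (R : realType) (G : R -> R) lam x : F_R19 G lam x = hf lam (G x).
Proof. by rewrite /F_R19 /hf !exprS expr0 !mulr1. Qed.

Lemma hf_cvg (R : realType) (G : R -> R) lam (F : set_system R) {FF : Filter F} l :
  G x @[x --> F] --> l -> F_R19 G lam x @[x --> F] --> hf lam l.
Proof.
move=> HG.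
have -> : F_R19 G lam = (fun x => (1 - lam) * G x + 3 * lam * (G x * G x) - 2 * lam * (G x * (G x * G x))).
  by apply: funext => x; rewrite F_R19E.
apply: cvgB; first apply: cvgD.
- by apply: cvgM => //; exact: cvg_cst.
- by apply: cvgM; [exact: cvg_cst| exact: cvgM].
- by apply: cvgM; [exact: cvg_cst| apply: cvgM => //; exact: cvgM].
Qed.

Lemma hf_mono (R : realType) (lam s t : R) : -2 <= lam <= 1 ->
  0 <= s -> s <= t -> t <= 1 -> hf lam s <= hf lam t.
Proof.
move=> /andP[l1 l2] s0 st t1.
have e : hf lam t - hf lam s = (t - s) * (1 - lam + lam * (3 * (t + s) - 2 * (t * t + t * s + s * s))).
  rewrite /hf; ring.
set q := 3 * (t + s) - 2 * (t * t + t * s + s * s).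
have a1 : t * t <= t by nra.
have a2 : s * s <= s by nra.
have a3 : t * s <= s by nra.
have a4 : t * s <= t by nra.
have q0 : 0 <= q by rewrite /q; lra.
have q1 : q <= 3 / 2.
  have h1 : 4 * (t * s) <= (t + s) * (t + s) by nra.
  have h2 : 0 <= (t + s - 1) * (t + s - 1) by rewrite -expr2 sqr_ge0.
  rewrite /q; nra.
have u0 : 0 <= 1 - lam + lam * q.
  case: (lerP 0 lam) => hl.
    have : 0 <= lam * q by apply: mulr_ge0.
    lra.
  have : lam * (3 / 2 - q) <= 0 by apply: mulr_le0_ge0 => //; [lra|lra].
  lra.
rewrite -subr_ge0 e; apply: mulr_ge0 => //; lra.
Qed.

Lemma G_hits (R : realType) (G : R -> R) (v : R) :
  is_continuous_cdf G -> 0 < v < 1 -> exists x, G x = v.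
Proof.
move=> [[mono rng rc lm lp] cont] /andP[v0 v1].
have [a Ha] := filter_ex (cvgr_lt _ lm v v0).
have [b Hb] := filter_ex (cvgr_gt _ lp v v1).
have ab : a <= b.
  rewrite leNgt; apply/negP => ba.
  have := mono _ _ (ltW ba); move: Ha Hb => /= Ha Hb; lra.
have hv : Num.min (G a) (G b) <= v <= Num.max (G a) (G b).
  move: Ha Hb => /= Ha Hb.
  rewrite ge_min le_max; apply/andP; split; apply/orP; [left|right]; lra.
have [c _ Hc] := @IVT R G a b v ab (continuous_subspaceT cont) hv.
by exists c.
Qed.

Theorem proposition5 (R : realType) (G : R -> R) :
  is_continuous_cdf G ->
  [/\ (forall lam : R, -1 <= lam <= 1 -> lam != 0 ->
         ~ (exists l1 l2 : R, S_G l1 l2 /\ F_R19 G lam = F_Gfam G l1 l2)),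
      (forall lam : R, - (1 / 2) <= lam <= 1 ->
         S_MG (1 - lam) (1 + 2 * lam) /\
         F_R19 G lam = F_Gfam G (1 - lam) (1 + 2 * lam))
    & (forall lam : R, -2 <= lam <= 1 -> is_cdf (F_R19 G lam))].
Proof.
move=> HG; have [[mono rng rc lm lp] cont] := HG.
split.
- move=> lam /andP[l1 l2] lnz [k1 [k2 [[/andP[k10 k11] /andP[k20 k21]] E]]].
  have [x1 H1] := @G_hits R G (1/3) HG ltac:(apply/andP; split; lra).
  have [x2 H2] := @G_hits R G (2/3) HG ltac:(apply/andP; split; lra).
  have E1 := congr1 (fun f => f x1) E.
  have E2 := congr1 (fun f => f x2) E.
  move: E1 E2; rewrite /F_R19 /F_Gfam /= H1 H2 !exprS !expr0 !mulr1 => E1 E2.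
  have : lam = 0 by nra.
  by move/eqP; rewrite (negbTE lnz).
- move=> lam /andP[l1 l2]; split.
    rewrite /S_MG; split; apply/andP; split; lra.
  by apply: funext => x; rewrite /F_R19 /F_Gfam; ring.
- move=> lam hl.
  have h0 : hf lam 0 = 0 by rewrite /hf; ring.
  have h1 : hf lam 1 = 1 by rewrite /hf; ring.
  split.
  + move=> x y xy; rewrite !F_R19E; apply: hf_mono => //.
    * by have /andP[] := rng x.
    * exact: mono.
    * by have /andP[] := rng y.
  + move=> x; rewrite F_R19E; have /andP[g0 g1] := rng x; apply/andP; split.
    * by rewrite -{1}h0; apply: hf_mono.
    * by rewrite -h1; apply: hf_mono.
  + by move=> a; rewrite F_R19E; apply: hf_cvg.
  + by rewrite -h0; apply: hf_cvg.
  + by rewrite -h1; apply: hf_cvg.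
Qed.
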